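(* Let $c\in\mathbb{C}(t)\setminus\{0,1,t\}$ and $F_n$, $P_1$ as in the context. Write $F_n(t,1)=(E_n+D_nt+O(t^2),\;C_n+O(t))$ as polynomials in $t$. Then $E_n=P_1(0,1)^{4^{n-1}}$ for all $n\ge1$, and $$\limsup_{n\to\infty}|C_n|^{1/4^{n-1}}\le|P_1(0,1)|,\qquad\limsup_{n\to\infty}|D_n|^{1/4^{n-1}}\le|P_1(0,1)|.$$
   Context: $F_{t_1,t_2}(z,w)=\big((t_1w^2-t_2z^2)^2,\;4t_2zw(w-z)(t_1w-t_2z)\big)$. $C=(c_1,c_2)$ is a pair of coprime homogeneous polynomials in $(t_1,t_2)$ of equal degree with $c(t)=c_1(t,1)/c_2(t,1)$. $F_1=F_{t_1,t_2}(C)/\gcd(F_{t_1,t_2}(C))=(P_1,Q_1)$ (dividing by the gcd of the two coordinates), and $F_{n+1}=F_{t_1,t_2}(F_n)/t_2^2$ (substituting the coordinates of $F_n$ for $(z,w)$). *)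

(* Defs.v *)
From HB Require Import structures.
From mathcomp Require Import all_boot all_order all_algebra.
From mathcomp Require Import all_classical all_reals all_analysis.
From mathcomp Require Import complex.
Set Implicit Arguments.
Unset Strict Implicit.
Unset Printing Implicit Defensive.
Import Order.TTheory GRing.Theory Num.Theory.
Local Open Scope ring_scope.
Local Open Scope complex_scope.

(* Everything is dehomogenized at t2 = 1: a homogeneous polynomial H(t1,t2)
   is represented by the univariate polynomial H(t,1) in {poly R[i]}, with
   t = 'X.            *)
Definition Fmap (R : rcfType) (zw : {poly R[i]} * {poly R[i]}) :
    {poly R[i]} * {poly R[i]} :=
  let z := zw.1 in let w := zw.2 in
  (('X * w ^+ 2 - z ^+ 2) ^+ 2, 4%:R * z * w * (w - z) * ('X * w - z)).

(* F_1(t,1) = F_{t,1}(C(t,1)) divided by the gcd of its two coordinates. *)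
Definition F1 (R : rcfType) (c1 c2 : {poly R[i]}) : {poly R[i]} * {poly R[i]} :=
  let PQ := Fmap (c1, c2) in
  let g := gcdp PQ.1 PQ.2 in (PQ.1 %/ g, PQ.2 %/ g).

(* Fn c1 c2 n = F_n(t,1) for n >= 1 (F_{n+1} = F(F_n)/t2^2, and t2 = 1). *)
Definition Fn (R : rcfType) (c1 c2 : {poly R[i]}) (n : nat) :
    {poly R[i]} * {poly R[i]} :=
  iter n.-1 (@Fmap R) (F1 c1 c2).

Definition En (R : rcfType) c1 c2 n : R[i] := (@Fn R c1 c2 n).1`_0.
Definition Dn (R : rcfType) c1 c2 n : R[i] := (@Fn R c1 c2 n).1`_1.
Definition Cn (R : rcfType) c1 c2 n : R[i] := (@Fn R c1 c2 n).2`_0.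
Definition P10 (R : rcfType) c1 c2 : R[i] := (@F1 R c1 c2).1`_0.

(* Main.v *)
Require Import Defs.
From HB Require Import structures.
From mathcomp Require Import all_boot all_order all_algebra.
From mathcomp Require Import all_classical all_reals all_analysis.
From mathcomp Require Import complex.
From mathcomp Require Import ring lra.
Import Order.TTheory GRing.Theory Num.Theory.
Local Open Scope ring_scope.

Section Helpers.
Local Open Scope classical_set_scope.

Lemma esup_le_cvg (R : realType) (u v : (\bar R)^nat) (l : \bar R) N :
 (forall n, (N <= n)%N -> (u n <= v n)%E) -> v @ \oo --> l -> (limn_esup u <= l)%E.
Proof.
move=> uv vl; rewrite limn_esup_lim.
have <- : limn (esups v) = l by apply: cvg_lim => //; apply: cvg_esups.
apply: lee_lim; [exact: is_cvg_esups| exact: is_cvg_esups|].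
near=> n; apply: ge_ereal_sup => _ [k /= nk <-].
apply: le_trans (uv k _) _.
  by apply: leq_trans nk; near: n; exists N.
by apply: ereal_sup_ubound; exists k.
Unshelve. all: by end_near. Qed.

Lemma cvg_geo_e (R : realType) (e K : R) :
  (fun n => (e + K * (2^-1) ^+ n)%:E) @ \oo --> e%:E.
Proof.
apply: cvg_EFin; first by apply: nearW.
rewrite -[X in _ --> X]addr0.
apply: cvgD; first exact: cvg_cst.
have := @cvg_geometric R K (2^-1).
apply => //. rewrite ger0_norm // invr_lt1 ?ltr1n ?unitfE //.
Qed.

End Helpers.

Lemma coef1M (F : comNzRingType) (p q : {poly F}) : (p * q)`_1 = p`_0 * q`_1 + p`_1 * q`_0.
Proof. by rewrite coefM big_ord_recr big_ord1 /=. Qed.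

Lemma A0 (F : comNzRingType) (a : F) : (- (a * a)) * (- (a * a)) = a ^+ 4.
Proof. ring. Qed.
Lemma A1 (F : comNzRingType) (a b : F) : 4%:R * a * b * (b - a) * (- a) =  4%:R * a * b * (b - a) * (- a).
Proof. ring. Qed.
Lemma A2 (F : comNzRingType) (a b c : F) :
  (- (a * a)) * (b * b - (a * c + c * a)) + (b * b - (a * c + c * a)) * (- (a * a)) =
  2%:R * (- a ^+ 2) * (b ^+ 2 - 2%:R * a * c).
Proof. ring. Qed.

Lemma G0 (F : comNzRingType) (z w : {poly F}) :
  (('X * w ^+ 2 - z ^+ 2) ^+ 2)`_0 = z`_0 ^+ 4.
Proof. rewrite !expr2 !coef0M !coefB coefXM /= !coef0M sub0r. exact: A0. Qed.
Lemma G0b (F : comNzRingType) (z w : {poly F}) :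
  (4%:R * z * w * (w - z) * ('X * w - z))`_0 = 4%:R * z`_0 * w`_0 * (w`_0 - z`_0) * (- z`_0).
Proof. rewrite !coef0M !coefB coefXM /= sub0r coefMn coef1 /=. done. Qed.
Lemma G1 (F : comNzRingType) (z w : {poly F}) :
  (('X * w ^+ 2 - z ^+ 2) ^+ 2)`_1 = 2%:R * (- z`_0 ^+ 2) * (w`_0 ^+ 2 - 2%:R * z`_0 * z`_1).
Proof. rewrite (expr2 ('X * w ^+ 2 - z ^+ 2)) coef1M !coefB !coefXM /= !expr2 coef1M !coef0M sub0r. exact: A2. Qed.

Lemma stepC (R : realFieldType) (c eps b : R) : 0 <= c -> 0 <= eps -> 8 <= b ->
  8 * c <= eps * b -> 8 * (4 * eps * c * (c + eps) * eps) <= (eps ^+ 4) * (b ^+ 2).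
Proof.
move=> c0 e0 b8 hc.
have h1 : 8 * eps <= eps * b by nra.
have h2 : 8 * (c + eps) <= 2 * (eps * b) by nra.
have h3 : (8 * c) * (8 * (c + eps)) <= (eps * b) * (2 * (eps * b)).
  apply: ler_pM => //; nra.
nra.
Qed.

Lemma stepD (R : realFieldType) (c d eps b : R) : 0 <= c -> 0 <= d -> 0 <= eps -> 8 <= b ->
  8 * c <= eps * b -> 8 * d <= eps * b ->
  8 * (2 * eps ^+ 2 * (c ^+ 2 + 2 * eps * d)) <= (eps ^+ 4) * (b ^+ 2).
Proof.
move=> c0 d0 e0 b8 hc hd.
have h3 : (8 * c) * (8 * c) <= (eps * b) * (eps * b) by apply: ler_pM => //; nra.
have h4 : eps ^+ 2 * (eps * (8 * d)) <= eps ^+ 2 * (eps * (eps * b)).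
  apply: ler_wpM2l; first nra. apply: ler_wpM2l => //.
have h5 : eps^+4 * (6 * b) <= eps^+4 * (b * b)/ 1.
  rewrite divr1; apply: ler_wpM2l; first nra. nra.
nra.
Qed.

Lemma stepC' (R : realFieldType) (a b c d : R) : 0 <= a -> 0 <= c -> d <= c + a ->
  8 * (4 * a * c * (c + a) * a) <= a ^+ 4 * b ^+ 2 -> 8 * (4 * a * c * d * a) <= a ^+ 4 * b ^+ 2.
Proof.
move=> a0 c0 hd h; apply: (Order.POrderTheory.le_trans _ h).
have p : 0 <= 32 * (a * c * a) by rewrite mulr_ge0 // !mulr_ge0.
have := ler_wpM2l p hd; nra.
Qed.

Lemma stepD' (R : realFieldType) (a b f g : R) : f <= g ->
  8 * (2 * a ^+ 2 * g) <= a ^+ 4 * b ^+ 2 -> 8 * (2 * a ^+ 2 * f) <= a ^+ 4 * b ^+ 2.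
Proof.
move=> hd h; apply: (Order.POrderTheory.le_trans _ h).
have p : 0 <= 16 * a ^+ 2 by rewrite mulr_ge0 // sqr_ge0.
have := ler_wpM2l p hd; nra.
Qed.

Lemma bern (R : realFieldType) (t : R) n : 0 <= t -> 1 + n%:R * t <= (1 + t) ^+ n.
Proof.
move=> t0; elim: n => [|n IH]; first by rewrite mul0r addr0 expr0.
rewrite exprS -natr1.
have h : 0 <= n%:R * t by apply: mulr_ge0.
nra.
Qed.
Lemma powR_root (R : realType) (x y : R) m : 0 <= x -> 0 <= y -> (0 < m)%N ->
  x <= y ^+ m -> x `^ (m%:R^-1) <= y.
Proof.
move=> x0 y0 m0 xy.
have h : x `^ (m%:R^-1) <= (y ^+ m) `^ (m%:R^-1).
  apply: ge0_ler_powR => //; rewrite ?nnegrE ?exprn_ge0 //.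
apply: (Order.POrderTheory.le_trans h).
rewrite -powR_mulrn // -powRrM divff ?powRr1 // pnatr_eq0 -lt0n //.
Qed.

Lemma final_bound (R : realType) (e L x : R) n : 0 < e -> 8 <= L -> 0 <= x ->
  8 * x <= e ^+ (4 ^ n) * L ^+ (2 ^ n) ->
  x `^ ((4 ^ n)%:R^-1) <= e + e * (L - 1) * (2^-1) ^+ n.
Proof.
move=> e0 L8 x0 hx.
set t := (L - 1) * (2^-1) ^+ n.
have t0 : 0 <= t by rewrite /t mulr_ge0 ?exprn_ge0 ?invr_ge0 //; lra.
have ey : e + e * (L - 1) * (2^-1) ^+ n = e * (1 + t) by rewrite /t; ring.
rewrite ey; apply: powR_root => //; first by rewrite mulr_ge0 //; lra.
  by rewrite expn_gt0.
have hL : L <= (1 + t) ^+ (2 ^ n).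
  apply: (Order.POrderTheory.le_trans _ (@bern _ t (2 ^ n) t0)).
  rewrite /t mulrA natrX. rewrite [_ * (L - 1)]mulrC -mulrA -exprMn.
  rewrite mulfV ?expr1n ?mulr1 ?pnatr_eq0 // addrC subrK //.
have hL2 : L ^+ (2 ^ n) <= ((1 + t) ^+ (2 ^ n)) ^+ (2 ^ n).
  have Ln : L \is Num.nneg by rewrite nnegrE; lra.
  have tn : (1 + t) ^+ (2 ^ n) \is Num.nneg by rewrite nnegrE exprn_ge0 //; lra.
  exact: (lerXn2r (2 ^ n) Ln tn hL).
have -> : (e * (1 + t)) ^+ (4 ^ n) = e ^+ (4 ^ n) * ((1 + t) ^+ (2 ^ n)) ^+ (2 ^ n).
  by rewrite exprMn -exprM -expnMn.
have he : 0 <= e ^+ (4 ^ n) by rewrite exprn_ge0 //; lra.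
have := ler_wpM2l he hL2.
move: hx he; move: (e ^+ (4 ^ n)) (L ^+ (2 ^ n)) (((1 + t) ^+ (2 ^ n)) ^+ (2 ^ n)) => a b c.
move=> *; nra.
Qed.

Lemma normc_ge0 (R : rcfType) (x : R[i]) : 0 <= Normc.normc x.
Proof. by case: x => a b; exact: sqrtr_ge0. Qed.

Lemma normcX (R : rcfType) (x : R[i]) n : Normc.normc (x ^+ n) = Normc.normc x ^+ n.
Proof.
elim: n => [|n IH]; first by rewrite !expr0 Normc.normc1.
by rewrite !exprS Normc.normcM IH.
Qed.

Lemma normc_nat (R : rcfType) n : Normc.normc (n%:R : R[i]) = n%:R.
Proof. by rewrite (@normcMn R 1 n) Normc.normc1. Qed.

Lemma normcB (R : rcfType) (x y : R[i]) : Normc.normc (x - y) <= Normc.normc x + Normc.normc y.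
Proof. by rewrite -(@normcN R y); apply: le_normcD. Qed.

Local Open Scope ring_scope.
Local Open Scope complex_scope.
Theorem lemma4p6 (R : realType) (c1 c2 : {poly R[i]}) :
  coprimep c1 c2 -> c2 != 0 ->
  c1 != 0 -> c1 != c2 -> c1 != 'X * c2 ->
  (forall n : nat, (1 <= n)%N ->
     En c1 c2 n = P10 c1 c2 ^+ (4 ^ n.-1)) /\
  (limn_esup (fun n : nat =>
     ((Normc.normc (Cn c1 c2 n.+1)) `^ (4 ^ n)%:R^-1)%:E)
     <= (Normc.normc (P10 c1 c2))%:E)%E /\
  (limn_esup (fun n : nat =>
     ((Normc.normc (Dn c1 c2 n.+1)) `^ (4 ^ n)%:R^-1)%:E)
     <= (Normc.normc (P10 c1 c2))%:E)%E.
Proof.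
move=> _ _ _ _ _.
set e := Normc.normc (P10 c1 c2).
have FS k : Fn c1 c2 k.+2 = Fmap (Fn c1 c2 k.+1) by [].
have hE k : En c1 c2 k.+1 = P10 c1 c2 ^+ (4 ^ k).
  elim: k => [|k IH]; first by rewrite expn0 expr1.
  rewrite /En FS /Fmap /= G0 -/(En c1 c2 k.+1) IH -exprM expnSr //.
have hC k : Cn c1 c2 k.+2 = 4%:R * En c1 c2 k.+1 * Cn c1 c2 k.+1 *
    (Cn c1 c2 k.+1 - En c1 c2 k.+1) * (- En c1 c2 k.+1).
  by rewrite /Cn /En FS /Fmap /= G0b.
have hD k : Dn c1 c2 k.+2 = 2%:R * (- En c1 c2 k.+1 ^+ 2) *
    (Cn c1 c2 k.+1 ^+ 2 - 2%:R * En c1 c2 k.+1 * Dn c1 c2 k.+1).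
  by rewrite /Cn /En /Dn FS /Fmap /= G1.
have hnE k : Normc.normc (En c1 c2 k.+1) = e ^+ (4 ^ k) by rewrite hE normcX.
split; first by move=> [|n] //= _; exact: hE.
have e0 : 0 <= e by apply: normc_ge0.
have [ez|epos] : e = 0 \/ 0 < e.
  by move: e0; rewrite le_eqVlt => /orP[/eqP <-|->]; [left|right].
- have z k : En c1 c2 k.+1 = 0.
    apply: Normc.eq0_normc; rewrite hnE ez expr0n.
    by rewrite expn_eq0.
  have pw n : (4 ^ n)%:R^-1 != 0 :> R by rewrite invr_eq0 pnatr_eq0 expn_eq0.
  split.
  + apply: (@esup_le_cvg R _ (fun=> e%:E) _ 1); last exact: cvg_cst.
    move=> [|n] // _; rewrite lee_fin hC z !(mulr0, mul0r) Normc.normc0 powR0 ?pw //.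
  + apply: (@esup_le_cvg R _ (fun=> e%:E) _ 1); last exact: cvg_cst.
    move=> [|n] // _; rewrite lee_fin hD z !(mulr0, mul0r, expr0n, oppr0) Normc.normc0 powR0 ?pw //.
set L := 8 * (1 + (Normc.normc (Cn c1 c2 1) + Normc.normc (Dn c1 c2 1)) / e).
have hc1 := normc_ge0 _ (Cn c1 c2 1).
have hd1 := normc_ge0 _ (Dn c1 c2 1).
have L8 : 8 <= L.
  rewrite /L; have : 0 <= (Normc.normc (Cn c1 c2 1) + Normc.normc (Dn c1 c2 1)) / e.
    by rewrite divr_ge0 //; lra.
  move=> h; lra.
have inv k : 8 * Normc.normc (Cn c1 c2 k.+1) <= e ^+ (4 ^ k) * L ^+ (2 ^ k) /\
             8 * Normc.normc (Dn c1 c2 k.+1) <= e ^+ (4 ^ k) * L ^+ (2 ^ k).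
  elim: k => [|k [IHc IHd]].
    rewrite expn0 !expr1.
    have -> : e * L = 8 * (e + (Normc.normc (Cn c1 c2 1) + Normc.normc (Dn c1 c2 1))).
      rewrite /L; field; lra.
    split; lra.
  have b8 : 8 <= L ^+ (2 ^ k).
    apply: (Order.POrderTheory.le_trans L8); apply: ler_eXnr; rewrite ?expn_gt0 //; lra.
  have eps0 : 0 <= e ^+ (4 ^ k) by rewrite exprn_ge0.
  have -> : e ^+ (4 ^ k.+1) = (e ^+ (4 ^ k)) ^+ 4 by rewrite -exprM expnSr.
  have -> : L ^+ (2 ^ k.+1) = (L ^+ (2 ^ k)) ^+ 2 by rewrite -exprM expnSr.
  have hc := normc_ge0 _ (Cn c1 c2 k.+1).
  have hd := normc_ge0 _ (Dn c1 c2 k.+1).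
  split.
    rewrite hC !Normc.normcM (@normcN R) normc_nat hnE.
    have hb := normcB _ (Cn c1 c2 k.+1) (En c1 c2 k.+1).
    rewrite hnE in hb.
    have hb0 := normc_ge0 _ (Cn c1 c2 k.+1 - En c1 c2 k.+1).
    have := @stepC _ _ _ _ hc eps0 b8 IHc.
    move: hb hb0 IHc eps0 hc b8.
    move: (e ^+ (4 ^ k)) (L ^+ (2 ^ k)) (Normc.normc (Cn c1 c2 k.+1))
      (Normc.normc (Cn c1 c2 k.+1 - En c1 c2 k.+1)) => a b c d.
    move=> *; apply: stepC' => //.
  rewrite hD !Normc.normcM (@normcN R) normcX normc_nat hnE.
  have hb : Normc.normc (Cn c1 c2 k.+1 ^+ 2 - 2%:R * En c1 c2 k.+1 * Dn c1 c2 k.+1)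
      <= Normc.normc (Cn c1 c2 k.+1) ^+ 2 + 2 * e ^+ (4 ^ k) * Normc.normc (Dn c1 c2 k.+1).
    apply: (Order.POrderTheory.le_trans (normcB _ _ _)).
    by rewrite normcX !Normc.normcM normc_nat hnE.
  have hb0 := normc_ge0 _ (Cn c1 c2 k.+1 ^+ 2 - 2%:R * En c1 c2 k.+1 * Dn c1 c2 k.+1).
  have := @stepD _ _ _ _ _ hc hd eps0 b8 IHc IHd.
  move: hb hb0 IHc IHd eps0 hc hd b8.
  move: (e ^+ (4 ^ k)) (L ^+ (2 ^ k)) (Normc.normc (Cn c1 c2 k.+1))
    (Normc.normc (Dn c1 c2 k.+1))
    (Normc.normc (Cn c1 c2 k.+1 ^+ 2 - 2%:R * En c1 c2 k.+1 * Dn c1 c2 k.+1)) => a b c d f.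
  move=> hb hb0 IHc' IHd' eps0' hc' hd' b8' H; exact: (stepD' _ _ _ _ _ hb H).
split.
- apply: (@esup_le_cvg R _ (fun n => (e + e * (L - 1) * (2^-1) ^+ n)%:E) _ 0); last exact: (@cvg_geo_e R e (e * (L - 1))).
  move=> n _; rewrite lee_fin; apply: final_bound => //; first exact: normc_ge0.
  by case: (inv n).
- apply: (@esup_le_cvg R _ (fun n => (e + e * (L - 1) * (2^-1) ^+ n)%:E) _ 0); last exact: (@cvg_geo_e R e (e * (L - 1))).
  move=> n _; rewrite lee_fin; apply: final_bound => //; first exact: normc_ge0.
  by case: (inv n).
Qed.
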